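(* (i) Let $A\in\mathbb K^{n\times n}$ be $s$-quasiseparable and let $t\ge 2s$ with $n=2^Kt$. Then $A$ has a $t$-HSS representation; for $t=2s$ this representation consists of $18ns$ field elements up to lower-order terms. (ii) (Optimality of $2s$.) Let $K\ge 3$, $n=2^Kt$, and suppose $A\in\mathbb K^{n\times n}$ has a $t$-HSS representation. Then $t\ge \operatorname{rank}\begin{bmatrix}A_{K;3..4,\,1..2} & A_{K;3..4,\,5..6}\end{bmatrix}$, where $A_{K;3..4,\,1..2}$ denotes the submatrix formed by the level-$K$ blocks in block rows $3,4$ and block columns $1,2$ (similarly for columns $5,6$). For an $s$-quasiseparable matrix this rank is at most $2s$, and there exist $s$-quasiseparable matrices for which it equals $2s$; for these, every $t$-HSS representation has $t\ge 2s$.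
   Context: A matrix $A\in\mathbb K^{n\times n}$ is $s$-quasiseparable if for every $k\in\{1,\dots,n\}$, $\operatorname{rank}(A[1..k,\,k+1..n])\le s$ and $\operatorname{rank}(A[k+1..n,\,1..k])\le s$. Let $n=2^Kt$. For $k\in\{0,\dots,K\}$, the level-$k$ block division of $A$ is $A=(A_{k;i,j})_{1\le i,j\le 2^k}$ with all blocks of size $n/2^k$. A $t$-HSS representation of $A$ consists of $t\times t$ matrices $U_{K;i},V_{K;i},D_i$ ($1\le i\le 2^K$), $R_{k;i},W_{k;i}$ ($2\le k\le K$, $1\le i\le 2^k$), $B_{k;i}$ ($1\le k\le K$, $1\le i\le 2^k$) such that $A_{K;i,i}=D_i$ for all $i$, and such that, defining recursively for $k=K-1,\dots,1$ and $1\le i\le 2^k$ $U_{k;i}=\begin{bmatrix}U_{k+1;2i-1}R_{k+1;2i-1}\\ U_{k+1;2i}R_{k+1;2i}\end{bmatrix}$, $V_{k;i}=\begin{bmatrix}W_{k+1;2i-1}V_{k+1;2i-1} & W_{k+1;2i}V_{k+1;2i}\end{bmatrix}$, one has for all $1\le k\le K$ and $1\le i\le 2^{k-1}$: $A_{k;2i-1,2i}=U_{k;2i-1}B_{k;2i-1}V_{k;2i}$ and $A_{k;2i,2i-1}=U_{k;2i}B_{k;2i}V_{k;2i-1}$. *)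

(* Defs.v *)
From HB Require Import structures.
From mathcomp Require Import all_boot all_order all_algebra.
Set Implicit Arguments. Unset Strict Implicit. Unset Printing Implicit Defensive.
Import GRing.Theory.
Local Open Scope ring_scope.

(* Conventions: all indices are 0-based.  A level-k block index i in the
   paper (1-based, 1 <= i <= 2^k) corresponds to i-1 here.  Blocks are
   indexed by the "depth" d = K - k, so that a level-k block has size
   2^(K-k) * t = 2^d * t. *)

(* Total entry access with natural-number indices (0 outside the matrix). *)
Definition getn (F : fieldType) (m n : nat) (A : 'M[F]_(m, n)) (r c : nat) : F :=
  match (insub r : option 'I_m), (insub c : option 'I_n) with
  | Some i, Some j => A i j
  | _, _ => 0
  end.

Definition quasiseparable (F : fieldType) (n s : nat) (A : 'M[F]_n) : Prop :=
  forall k : nat, (0 < k <= n)%N ->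
    (\rank (\matrix_(i < k, j < n - k) getn A i (k + j)) <= s)%N /\
    (\rank (\matrix_(i < n - k, j < k) getn A (k + i) j) <= s)%N.

Lemma bs0 (t : nat) : (2 ^ 0 * t = t)%N.
Proof. by rewrite expn0 mul1n. Qed.

Lemma bsS (d t : nat) : (2 ^ d.+1 * t = 2 ^ d * t + 2 ^ d * t)%N.
Proof. by rewrite expnS -mulnA mul2n -addnn. Qed.

(* Block (i, j) (0-based) of the block division of A into blocks of size
   2^d * t.  With n = 2^K t and d = K - k this is A_{k; i+1, j+1}. *)
Definition blk (F : fieldType) (n t : nat) (A : 'M[F]_n) (d i j : nat)
  : 'M[F]_(2 ^ d * t) :=
  \matrix_(a < 2 ^ d * t, b < 2 ^ d * t)
     getn A (i * (2 ^ d * t) + a) (j * (2 ^ d * t) + b).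

(* The nested bases: hss_U K UK R d i = U_{K-d; i+1} of the paper, built
   recursively from the leaf generators UK i = U_{K;i+1} and the
   translation matrices R k i = R_{k;i+1}. *)
Fixpoint hss_U (F : fieldType) (K t : nat) (UK : nat -> 'M[F]_t)
  (R : nat -> nat -> 'M[F]_t) (d : nat) : nat -> 'M[F]_(2 ^ d * t, t) :=
  match d with
  | 0 => fun i => castmx (esym (bs0 t), erefl) (UK i)
  | d'.+1 => fun i =>
      castmx (esym (bsS d' t), erefl)
        (col_mx (hss_U K UK R d' (2 * i) *m R (K - d')%N (2 * i))
                (hss_U K UK R d' (2 * i + 1) *m R (K - d')%N (2 * i + 1)))
  end.

(* hss_V K VK W d i = V_{K-d; i+1} of the paper. *)
Fixpoint hss_V (F : fieldType) (K t : nat) (VK : nat -> 'M[F]_t)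
  (W : nat -> nat -> 'M[F]_t) (d : nat) : nat -> 'M[F]_(t, 2 ^ d * t) :=
  match d with
  | 0 => fun i => castmx (erefl, esym (bs0 t)) (VK i)
  | d'.+1 => fun i =>
      castmx (erefl, esym (bsS d' t))
        (row_mx (W (K - d')%N (2 * i) *m hss_V K VK W d' (2 * i))
                (W (K - d')%N (2 * i + 1) *m hss_V K VK W d' (2 * i + 1)))
  end.

(* Only the values at the indices listed in the paper matter:
   UK i, VK i, D i for i < 2^K; R k i, W k i for 2 <= k <= K, i < 2^k;
   B k i for 1 <= k <= K, i < 2^k. *)
Definition hss_rep (F : fieldType) (K t : nat) (A : 'M[F]_(2 ^ K * t))
  (UK VK D : nat -> 'M[F]_t) (R W B : nat -> nat -> 'M[F]_t) : Prop :=
  (forall i, (i < 2 ^ K)%N ->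
     blk t A 0 i i = castmx (esym (bs0 t), esym (bs0 t)) (D i)) /\
  (forall k, (1 <= k <= K)%N -> forall i, (i < 2 ^ (k - 1))%N ->
     blk t A (K - k) (2 * i) (2 * i + 1) =
       hss_U K UK R (K - k) (2 * i) *m B k (2 * i) *m hss_V K VK W (K - k) (2 * i + 1)
     /\
     blk t A (K - k) (2 * i + 1) (2 * i) =
       hss_U K UK R (K - k) (2 * i + 1) *m B k (2 * i + 1) *m hss_V K VK W (K - k) (2 * i)).

Definition has_HSS (F : fieldType) (K t : nat) (A : 'M[F]_(2 ^ K * t)) : Prop :=
  exists (UK VK D : nat -> 'M[F]_t) (R W B : nat -> nat -> 'M[F]_t),
    hss_rep A UK VK D R W B.

(* Number of field elements in a t-HSS representation with K levels:
   3 * 2^K leaf matrices U, V, D; 2 * sum_{k=2}^K 2^k matrices R, W;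
   sum_{k=1}^K 2^k matrices B; each t x t. *)
Definition hss_size (K t : nat) : nat :=
  (3 * 2 ^ K + 2 * (\sum_(2 <= k < K.+1) 2 ^ k) + \sum_(1 <= k < K.+1) 2 ^ k)
    * (t * t).

(* [A_{K;3..4,1..2}  A_{K;3..4,5..6}] (level-K blocks of size t). *)
Definition sep_mx (F : fieldType) (K t : nat) (A : 'M[F]_(2 ^ K * t))
  : 'M[F]_(2 * t, 2 * t + 2 * t) :=
  row_mx (\matrix_(i < 2 * t, j < 2 * t) getn A (2 * t + i) j)
         (\matrix_(i < 2 * t, j < 2 * t) getn A (2 * t + i) (4 * t + j)).

(* Main.v *)
Require Import Defs.
From HB Require Import structures.
From mathcomp Require Import all_boot all_order all_algebra.
From mathcomp Require Import zify ring lra.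
Set Implicit Arguments. Unset Strict Implicit. Unset Printing Implicit Defensive.
Import GRing.Theory.

Section Gen.
Variable F : fieldType.
Local Open Scope ring_scope.

Lemma getn_mx m n (h : nat -> nat -> F) r c :
  getn (\matrix_(i < m, j < n) h i j) r c = if (r < m)%N && (c < n)%N then h r c else 0.
Proof.
rewrite /getn; case: insubP => [i -> <- | /negbTE ->] //=.
by case: insubP => [j -> <- | /negbTE ->] //=; rewrite mxE.
Qed.

Lemma getn_ord m n (A : 'M[F]_(m, n)) (i : 'I_m) (j : 'I_n) : getn A i j = A i j.
Proof. by rewrite /getn !valK. Qed.

Lemma getn_out m n (A : 'M[F]_(m, n)) r c : (m <= r)%N || (n <= c)%N -> getn A r c = 0.
Proof.
rewrite /getn; case/orP => H.
  by rewrite insubN // -leqNgt.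
by case: (insub r) => //; rewrite insubN // -leqNgt.
Qed.

Definition selm m1 m2 (f : nat -> nat) : 'M[F]_(m1, m2) :=
  \matrix_(i, a) ((f i == a :> nat)%:R).

Lemma sum_sel m (x : nat) (G : 'I_m -> F) :
  \sum_(a < m) (x == a :> nat)%:R * G a = if insub x is Some a then G a else 0.
Proof.
case: insubP => [a0 Hlt Ha0 | Hn].
  rewrite (bigD1 a0) //= -Ha0 eqxx mul1r big1 ?addr0 // => a Ha.
  by move: Ha; rewrite eq_sym -val_eqE => /negbTE ->; rewrite mul0r.
rewrite big1 // => a _; case: eqP => [E|]; last by rewrite mul0r.
by move: Hn; rewrite E ltn_ord.
Qed.

Lemma getn_sel m1 n1 m2 n2 (M : 'M[F]_(m1, n1)) (N : 'M[F]_(m2, n2)) (f g : nat -> nat) :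
  (forall (i : 'I_m1) (j : 'I_n1), M i j = getn N (f i) (g j)) ->
  M = selm m1 m2 f *m N *m (selm n1 n2 g)^T.
Proof.
move=> H; apply/matrixP => i j; rewrite H !mxE.
under eq_bigr => b _ do rewrite !mxE.
under eq_bigr => b _ do under eq_bigr => a _ do rewrite !mxE.
under eq_bigr => b _ do rewrite sum_sel mulrC.
rewrite sum_sel /getn.
by case: (insub (f i)) => [a|]; case: (insub (g j)).
Qed.

Lemma rank_getn m1 n1 m2 n2 (M : 'M[F]_(m1, n1)) (N : 'M[F]_(m2, n2)) (f g : nat -> nat) :
  (forall (i : 'I_m1) (j : 'I_n1), M i j = getn N (f i) (g j)) ->
  (\rank M <= \rank N)%N.
Proof.
move/getn_sel => ->; apply: leq_trans (mxrankM_maxl _ _) _; exact: mxrankM_maxr.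
Qed.

Lemma submx_getn m1 m2 n (M : 'M[F]_(m1, n)) (N : 'M[F]_(m2, n)) (f : nat -> nat) :
  (forall (i : 'I_m1) (j : 'I_n), M i j = getn N (f i) j) -> (M <= N)%MS.
Proof.
move=> H; rewrite (@getn_sel _ _ _ _ M N f (fun x => x) H).
have -> : selm n n (fun x => x) = 1%:M by apply/matrixP => i j; rewrite !mxE.
by rewrite trmx1 mulmx1 submxMl.
Qed.


Lemma getn0 m n r c : getn (0 : 'M[F]_(m, n)) r c = 0.
Proof. by rewrite /getn; case: insub => // i; case: insub => // j; rewrite mxE. Qed.

Lemma row_mxE' m n1 n2 (A : 'M[F]_(m, n1)) (B : 'M[F]_(m, n2)) i j :
  row_mx A B i j = if (j < n1)%N then getn A i j else getn B i (j - n1).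
Proof.
rewrite mxE; case: splitP => k ->.
  by rewrite getn_ord.
by rewrite addKn getn_ord.
Qed.

Lemma col_mxE' m1 m2 n (A : 'M[F]_(m1, n)) (B : 'M[F]_(m2, n)) i j :
  col_mx A B i j = if (i < m1)%N then getn A i j else getn B (i - m1) j.
Proof.
rewrite mxE; case: splitP => k ->.
  by rewrite getn_ord.
by rewrite addKn getn_ord.
Qed.

Lemma pow2K8 K : (3 <= K)%N -> (8 <= 2 ^ K)%N.
Proof. by move=> h; have := leq_pexp2l (isT : (0 < 2)%N) h. Qed.

Lemma part4 (K t s : nat) (A : 'M[F]_(2 ^ K * t)) :
  (3 <= K)%N -> quasiseparable s A -> (\rank (sep_mx A) <= 2 * s)%N.
Proof.
move=> K3 qs.
have [t0|tpos] := posnP t.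
  by apply: leq_trans (rank_leq_row _) _; rewrite t0.
have h8 := pow2K8 K3.
have [Hur _] := qs (4 * t)%N ltac:(apply/andP; split; nia).
have [_ Hll] := qs (2 * t)%N ltac:(apply/andP; split; nia).
rewrite /sep_mx.
set L := \matrix_(i < 2 * t, j < 2 * t) getn A (2 * t + i) j.
set R := \matrix_(i < 2 * t, j < 2 * t) getn A (2 * t + i) (4 * t + j).
have -> : row_mx L R = row_mx L 0 + row_mx 0 R by rewrite add_row_mx addr0 add0r.
rewrite (_ : (2 * s = s + s)%N); last by lia.
apply: leq_trans (mxrank_add _ _) (leq_add _ _).
  apply: leq_trans Hll; apply: (@rank_getn _ _ _ _ _ _ id id) => i j.
  rewrite row_mxE' (@getn_mx _ _ (fun r c => getn A (2 * t + r) c)).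
  have hi := ltn_ord i; have hi2 : (i < 2 ^ K * t - 2 * t)%N by nia.
  rewrite hi2 /=; case: ifP => hj; first by rewrite /L (@getn_mx _ _ (fun r c => getn A (2 * t + r) c)) hi hj.
  by rewrite getn0.
apply: leq_trans Hur; apply: (@rank_getn _ _ _ _ _ _ (fun i => 2 * t + i)%N
   (fun j => if (j < 2 * t)%N then (2 ^ K * t)%N else (j - 2 * t)%N)) => i j.
rewrite row_mxE' (@getn_mx _ _ (fun r c => getn A r (4 * t + c))) /=.
have hi := ltn_ord i; have hj := ltn_ord j.
case: ifP => hj2. by rewrite getn0 (_ : (2 ^ K * t < 2 ^ K * t - 4 * t)%N = false) ?andbF //; apply/negbTE; rewrite -leqNgt leq_subr.
rewrite /R (@getn_mx _ _ (fun r c => getn A (2 * t + r) (4 * t + c))) (_ : (2 * t + i < 4 * t)%N); last by nia.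
rewrite hi /=.
have -> : (j - 2 * t < 2 ^ K * t - 4 * t)%N by nia.
by rewrite (_ : (j - 2 * t < 2 * t)%N) //; nia.
Qed.


Lemma getn_row_mx m n1 n2 (A : 'M[F]_(m, n1)) (B : 'M[F]_(m, n2)) r c :
  getn (row_mx A B) r c = if (c < n1)%N then getn A r c else getn B r (c - n1).
Proof.
have [hr|hr] := ltnP r m; last first.
  by rewrite !getn_out ?hr //; case: ifP.
have [hc|hc] := ltnP c (n1 + n2); last first.
  rewrite getn_out ?hc ?orbT // (_ : (c < n1)%N = false); last by lia.
  by rewrite getn_out //; apply/orP; right; lia.
by rewrite -[r]/(nat_of_ord (Ordinal hr)) -[c]/(nat_of_ord (Ordinal hc)) getn_ord row_mxE'.
Qed.

Lemma getn1 s a b : getn (1%:M : 'M[F]_s) a b =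
  if [&& (a < s)%N, (b < s)%N & a == b] then 1 else 0.
Proof.
have [ha|ha] := ltnP a s; last by rewrite getn_out ?ha.
have [hb|hb] := ltnP b s; last by rewrite getn_out ?hb ?orbT.
rewrite -[a]/(nat_of_ord (Ordinal ha)) -[b]/(nat_of_ord (Ordinal hb)) getn_ord mxE /=.
by rewrite -val_eqE /=; case: eqP.
Qed.

Definition ex_h (t s : nat) (r c : nat) : F :=
  if ((r == 2 * t + c)%N && (c < s)%N) || [&& (2 * t + s <= r)%N, (r < 2 * t + 2 * s)%N & (c + s == r + 2 * t)%N]
  then 1 else 0.

Definition ex_mx K t s : 'M[F]_(2 ^ K * t) := \matrix_(r, c) ex_h t s r c.

Ltac crush := rewrite /ex_h; repeat (case: ifP => ?); (by []) || (exfalso; lia).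

Lemma ex_qs K t s : (s <= t)%N -> quasiseparable s (ex_mx K t s).
Proof.
move=> st k /andP [k0 kn]; split.
  apply: leq_trans (_ : \rank (1%:M : 'M[F]_s) <= s)%N; last by rewrite mxrank1.
  apply: (@rank_getn _ _ _ _ _ _ (fun i => if (2 * t + s <= i)%N then (i - (2 * t + s))%N else s)
     (fun j => if (4 * t <= k + j)%N then (k + j - 4 * t)%N else s)) => i j.
  have hi := ltn_ord i; have hj := ltn_ord j.
  rewrite mxE (@getn_mx _ _ (ex_h t s)) getn1; case: (leqP (2 * t + s) i) => ?; case: (leqP (4 * t) (k + j)) => ? /=; crush.
apply: leq_trans (_ : \rank (1%:M : 'M[F]_s) <= s)%N; last by rewrite mxrank1.
apply: (@rank_getn _ _ _ _ _ _ (fun i => if (2 * t <= k + i)%N then (k + i - 2 * t)%N else s)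
   id) => i j.
have hi := ltn_ord i; have hj := ltn_ord j.
rewrite mxE (@getn_mx _ _ (ex_h t s)) getn1.
case: (leqP (2 * t) (k + i)) => ? /=; crush.
Qed.


Lemma ex_rank K t s : (3 <= K)%N -> (s <= t)%N -> \rank (sep_mx (ex_mx K t s)) = (2 * s)%N.
Proof.
move=> K3 st; apply/eqP; rewrite eqn_leq part4 ?ex_qs //=.
have h8 := pow2K8 K3.
apply: leq_trans (_ : \rank (1%:M : 'M[F]_(2 * s)) <= _)%N; first by rewrite mxrank1.
apply: (@rank_getn _ _ _ _ _ _ id
   (fun j => if (j < s)%N then j else (2 * t + (j - s))%N)) => i j.
have hi := ltn_ord i; have hj := ltn_ord j.
rewrite -getn_ord getn1 /sep_mx getn_row_mx.
rewrite (@getn_mx _ _ (fun r c => getn (ex_mx K t s) (2 * t + r) c)).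
rewrite (@getn_mx _ _ (fun r c => getn (ex_mx K t s) (2 * t + r) (4 * t + c))).
rewrite /ex_mx !(@getn_mx _ _ (ex_h t s)).
have hn : (8 * t <= 2 ^ K * t)%N by rewrite leq_mul2r h8 orbT.
case: (ltnP j s) => ? /=; crush.
exact: ex_qs.
Qed.


Lemma getn_cast m1 n1 m2 n2 (e : (m1 = m2) * (n1 = n2)) (M : 'M[F]_(m1, n1)) r c :
  getn (castmx e M) r c = getn M r c.
Proof. by case: e => e1 e2; case: m2 / e1; case: n2 / e2; rewrite castmx_id. Qed.

Lemma castmx_mull m1 m2 n p (e : m1 = m2) (M : 'M[F]_(m1, n)) (Y : 'M[F]_(n, p)) :
  castmx (e, erefl) M *m Y = castmx (e, erefl) (M *m Y).
Proof. by case: m2 / e; rewrite !castmx_id. Qed.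

Lemma castmx_mulr m n p1 p2 (e : p1 = p2) (M : 'M[F]_(m, n)) (Y : 'M[F]_(n, p1)) :
  M *m castmx (erefl, e) Y = castmx (erefl, e) (M *m Y).
Proof. by case: p2 / e; rewrite !castmx_id. Qed.

Lemma getn_col_mx m1 m2 n (A : 'M[F]_(m1, n)) (B : 'M[F]_(m2, n)) r c :
  getn (col_mx A B) r c = if (r < m1)%N then getn A r c else getn B (r - m1) c.
Proof.
have [hc|hc] := ltnP c n; last first.
  by rewrite !getn_out ?hc ?orbT //; case: ifP.
have [hr|hr] := ltnP r (m1 + m2); last first.
  rewrite getn_out ?hr // (_ : (r < m1)%N = false); last by lia.
  by rewrite getn_out //; apply/orP; left; lia.
by rewrite -[r]/(nat_of_ord (Ordinal hr)) -[c]/(nat_of_ord (Ordinal hc)) getn_ord col_mxE'.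
Qed.

Lemma getn_hsplit m n1 n2 (M : 'M[F]_(m, n1 + n2)) r c :
  getn M r c = if (c < n1)%N then getn (lsubmx M) r c else getn (rsubmx M) r (c - n1).
Proof. by rewrite -{1}[M]hsubmxK getn_row_mx. Qed.

Lemma getn_lsub m n1 n2 (M : 'M[F]_(m, n1 + n2)) r c :
  (c < n1)%N -> getn (lsubmx M) r c = getn M r c.
Proof. by move=> h; rewrite (getn_hsplit M) h. Qed.

Lemma part3 (K t : nat) (A : 'M[F]_(2 ^ K * t)) :
     (3 <= K)%N -> has_HSS A -> (\rank (sep_mx A) <= t)%N.
Proof.
move=> K3 [UK [VK [D [R [W [B [_ H]]]]]]].
have h8 := pow2K8 K3.
have hn : (8 * t <= 2 ^ K * t)%N by rewrite leq_mul2r h8 orbT.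
have k1 : (1 <= K - 1 <= K)%N by apply/andP; split; lia.
have k2 : (1 <= K - 2 <= K)%N by apply/andP; split; lia.
have [_ H1] := H (K - 1)%N k1 0%N (expn_gt0 _ _).
have [H2 _] := H (K - 2)%N k2 0%N (expn_gt0 _ _).
rewrite (_ : (K - (K - 1) = 1)%N) in H1; last by lia.
rewrite (_ : (K - (K - 2) = 2)%N) in H2; last by lia.
rewrite muln0 add0n in H1 H2.
set U11 := hss_U K UK R 1 1 in H1 *.
have eU2 : hss_U K UK R 2 0 = castmx (esym (bsS 1 t), erefl)
   (col_mx (hss_U K UK R 1 0 *m R (K - 1)%N 0%N) (U11 *m R (K - 1)%N 1%N)) by [].
rewrite eU2 in H2; clearbody U11.
set G1 := B (K - 1)%N 1%N *m hss_V K VK W 1 0.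
set G2 := lsubmx (castmx (erefl, bsS 1 t) (R (K - 1)%N 1%N *m B (K - 2)%N 0%N *m hss_V K VK W 2 1)).
have -> : sep_mx A = U11 *m row_mx G1 G2.
  apply/matrixP => i j; rewrite -!getn_ord.
  have hi := ltn_ord i; have hj := ltn_ord j.
  rewrite /sep_mx mul_mx_row !getn_row_mx.
  rewrite (@getn_mx _ _ (fun r c => getn A (2 * t + r) c)).
  rewrite (@getn_mx _ _ (fun r c => getn A (2 * t + r) (4 * t + c))).
  case: ifP => hj2.
    rewrite /G1 mulmxA -H1 /blk (@getn_mx _ _ (fun a b => getn A (1 * (2 ^ 1 * t) + a) (0 * (2 ^ 1 * t) + b))).
    by rewrite hi hj2 /= expn1 mul1n mul0n add0n.
  have hc : (j - 2 * t < 2 * t)%N by lia.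
  rewrite hi hc /= /G2 mulmx_lsub getn_lsub; last by [].
  rewrite castmx_mulr getn_cast !mulmxA.
  have E : getn (blk t A 2 0 1) (2 * t + i) (j - 2 * t) =
     getn (U11 *m R (K - 1)%N 1%N *m B (K - 2)%N 0%N *m hss_V K VK W 2 1) i (j - 2 * t).
    rewrite H2 !castmx_mull !mul_col_mx getn_cast getn_col_mx.
    rewrite (_ : (2 * t + i < 2 ^ 1 * t)%N = false); last by rewrite expn1; lia.
    by rewrite (_ : (2 * t + i - 2 ^ 1 * t = i)%N) //; rewrite expn1; lia.
  rewrite -E.
  rewrite /blk (@getn_mx _ _ (fun a b => getn A (0 * (2 ^ 2 * t) + a) (1 * (2 ^ 2 * t) + b))).
  rewrite (_ : (2 * t + i < 2 ^ 2 * t)%N); last by rewrite (_ : 2 ^ 2 = 4)%N //; lia.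
  rewrite (_ : (j - 2 * t < 2 ^ 2 * t)%N); last by rewrite (_ : 2 ^ 2 = 4)%N //; lia.
  by rewrite /= mul0n add0n mul1n (_ : 2 ^ 2 = 4)%N.
apply: leq_trans (mxrankM_maxl _ _) (rank_leq_col _).
Qed.



Definition Hc K t (A : 'M[F]_(2 ^ K * t)) d i : 'M[F]_(2 ^ K * t, 2 ^ d * t) :=
  \matrix_(r, b) (if ((r < i * (2 ^ d * t)) || (i * (2 ^ d * t) + 2 ^ d * t <= r))%N
                  then getn A r (i * (2 ^ d * t) + b) else 0).

Lemma rank_Hc K t s (A : 'M[F]_(2 ^ K * t)) d i :
  quasiseparable s A -> (\rank (Hc A d i) <= 2 * s)%N.
Proof.
move=> qs.
set n := (2 ^ K * t)%N; set m := (2 ^ d * t)%N.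
have [m0|mpos] := posnP m.
  by apply: leq_trans (rank_leq_col _) _; rewrite -/m m0.
set k := (i * m)%N.
set Up := \matrix_(r < n, b < m) (if (r < k)%N then getn A r (k + b) else 0).
set Lo := \matrix_(r < n, b < m) (if (k + m <= r)%N then getn A r (k + b) else 0).
have -> : Hc A d i = Up + Lo.
  apply/matrixP => r b; rewrite !mxE -/m -/k.
  have hb := ltn_ord b.
  case: (ltnP r k) => h1 /=.
    by rewrite (_ : (k + m <= r)%N = false) ?addr0 //; lia.
  by case: ifP => h2; rewrite add0r.
rewrite (_ : (2 * s = s + s)%N); last by lia.
apply: leq_trans (mxrank_add _ _) (leq_add _ _).
  have [hk|hk] := boolP ((0 < k) && (k <= n))%N.
    have [Hur _] := qs k hk.
    apply: leq_trans Hur; apply: (@rank_getn _ _ _ _ _ _ id id) => r b.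
    rewrite mxE (@getn_mx _ _ (fun r c => getn A r (k + c))) /=.
    case: ifP => //= hr.
    case: ltnP => // hb.
    by rewrite getn_out // orbC -/n; apply/orP; left; lia.
  have -> : Up = 0.
    apply/matrixP => r b; rewrite !mxE.
    case: ifP => // hr; rewrite getn_out //; apply/orP; right.
    have hb := ltn_ord b; lia.
  by rewrite mxrank0.
have [hk|hk] := leqP (k + m) n.
  have [_ Hll] := qs (k + m)%N ltac:(apply/andP; split; lia).
  apply: leq_trans Hll.
  apply: (@rank_getn _ _ _ _ _ _ (fun r => if (k + m <= r)%N then (r - (k + m))%N else n)
           (fun b => k + b)%N) => r b.
  have hr := ltn_ord r; have hb := ltn_ord b.
  rewrite mxE (@getn_mx _ _ (fun r c => getn A (k + m + r) c)).
  case: ifP => h.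
    rewrite (_ : (r - (k + m) < n - (k + m))%N) /=; last by lia.
    by rewrite (_ : (k + b < k + m)%N) // ?subnKC //; lia.
  by rewrite ltnNge leq_subr.
have -> : Lo = 0.
  apply/matrixP => r b; rewrite !mxE.
  have hr := ltn_ord r.
  by case: ifP => // h; lia.
by rewrite mxrank0.
Qed.


Lemma getn_tr m n (A : 'M[F]_(m, n)) r c : getn A^T r c = getn A c r.
Proof.
rewrite /getn; case: (insub r) => [i|]; case: (insub c) => [j|] //.
by rewrite mxE.
Qed.

Lemma qs_tr n s (A : 'M[F]_n) : quasiseparable s A -> quasiseparable s A^T.
Proof.
move=> qs k hk; have [h1 h2] := qs k hk; split.
  rewrite (_ : \matrix_(i < k, j < n - k) getn A^T i (k + j) =
               (\matrix_(i < n - k, j < k) getn A (k + i) j)^T) ?mxrank_tr //.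
  by apply/matrixP => i j; rewrite !mxE getn_tr.
rewrite (_ : \matrix_(i < n - k, j < k) getn A^T (k + i) j =
             (\matrix_(i < k, j < n - k) getn A i (k + j))^T) ?mxrank_tr //.
by apply/matrixP => i j; rewrite !mxE getn_tr.
Qed.

Lemma sub_lsub m1 m2 n1 n2 (X : 'M[F]_(m1, n1 + n2)) (Y : 'M[F]_(m2, n1 + n2)) :
  (X <= Y)%MS -> (lsubmx X <= lsubmx Y)%MS.
Proof. by case/submxP => D ->; rewrite -mulmx_lsub submxMl. Qed.

Lemma sub_rsub m1 m2 n1 n2 (X : 'M[F]_(m1, n1 + n2)) (Y : 'M[F]_(m2, n1 + n2)) :
  (X <= Y)%MS -> (rsubmx X <= rsubmx Y)%MS.
Proof. by case/submxP => D ->; rewrite -mulmx_rsub submxMl. Qed.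

Lemma sub_cast m1 m2 n1 n2 (e : n1 = n2) (X : 'M[F]_(m1, n1)) (Y : 'M[F]_(m2, n1)) :
  (X <= Y)%MS -> (castmx (erefl, e) X <= castmx (erefl, e) Y)%MS.
Proof. by case: n2 / e; rewrite !castmx_id. Qed.

Section VCon.
Variables (K t : nat) (A : 'M[F]_(2 ^ K * t)).
Hypothesis HA : forall d i, (\rank (Hc A d i) <= t)%N.

Definition Vd d i : 'M[F]_(t, 2 ^ d * t) :=
  (pid_mx (\rank (Hc A d i)) : 'M_(t, _)) *m row_base (Hc A d i).

Lemma Hc_sub_Vd d i : (Hc A d i <= Vd d i)%MS.
Proof.
apply: submx_trans (_ : (Hc A d i <= row_base (Hc A d i))%MS) _.
  by rewrite eq_row_base.
apply/submxP; exists (pid_mx (\rank (Hc A d i))).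
by rewrite /Vd mulmxA mul_pid_mx minnn (minn_idPr (HA d i)) pid_mx_1 mul1mx.
Qed.

Lemma Vd_sub_Hc d i : (Vd d i <= Hc A d i)%MS.
Proof. by apply: submx_trans (submxMl _ _) _; rewrite eq_row_base. Qed.

Lemma Hc_child_l d i :
  (lsubmx (castmx (erefl, bsS d t) (Hc A d.+1 i)) <= Hc A d (2 * i))%MS.
Proof.
apply: (@submx_getn _ _ _ _ _ (fun r => if ((r < i * (2 ^ d.+1 * t)) ||
     (i * (2 ^ d.+1 * t) + 2 ^ d.+1 * t <= r))%N then r else (2 ^ K * t)%N)) => r b.
rewrite mxE castmxE /= mxE /=.
have e1 : (i * (2 ^ d.+1 * t) = 2 * i * (2 ^ d * t))%N by rewrite expnS; ring.
have e2 : (2 ^ d.+1 * t = 2 * (2 ^ d * t))%N by rewrite expnS; ring.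
have hr := ltn_ord r; have hb := ltn_ord b.
rewrite e1 e2 /Hc (@getn_mx _ _ (fun r b => if ((r < 2 * i * (2 ^ d * t)) ||
   (2 * i * (2 ^ d * t) + 2 ^ d * t <= r))%N then getn A r (2 * i * (2 ^ d * t) + b) else 0)).
set m := (2 ^ d * t)%N; set x := (i * m)%N.
rewrite (_ : (2 * i * m = 2 * x)%N); last by rewrite /x; ring.
case: ifP => h; last by rewrite ltnn.
rewrite hr hb /= ifT //; lia.
Qed.

Lemma Hc_child_r d i :
  (rsubmx (castmx (erefl, bsS d t) (Hc A d.+1 i)) <= Hc A d (2 * i + 1))%MS.
Proof.
apply: (@submx_getn _ _ _ _ _ (fun r => if ((r < i * (2 ^ d.+1 * t)) ||
     (i * (2 ^ d.+1 * t) + 2 ^ d.+1 * t <= r))%N then r else (2 ^ K * t)%N)) => r b.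
rewrite mxE castmxE /= mxE /=.
have e1 : (i * (2 ^ d.+1 * t) = 2 * i * (2 ^ d * t))%N by rewrite expnS; ring.
have e2 : (2 ^ d.+1 * t = 2 * (2 ^ d * t))%N by rewrite expnS; ring.
have hr := ltn_ord r; have hb := ltn_ord b.
rewrite e1 e2 /Hc (@getn_mx _ _ (fun r b => if ((r < (2 * i + 1) * (2 ^ d * t)) ||
   ((2 * i + 1) * (2 ^ d * t) + 2 ^ d * t <= r))%N then getn A r ((2 * i + 1) * (2 ^ d * t) + b) else 0)).
set m := (2 ^ d * t)%N; set x := (i * m)%N.
rewrite (_ : (2 * i * m = 2 * x)%N); last by rewrite /x; ring.
rewrite (_ : ((2 * i + 1) * m = 2 * x + m)%N); last by rewrite /x; ring.
case: ifP => h; last by rewrite ltnn.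
rewrite hr hb /= ifT ?addnA //; lia.
Qed.

Definition Wf (k j : nat) : 'M[F]_t :=
  let d := (K - k)%N in
  let V' := castmx (erefl, bsS d t) (Vd d.+1 j./2) in
  if odd j then rsubmx V' *m pinvmx (Vd d j) else lsubmx V' *m pinvmx (Vd d j).

Definition VKf (i : nat) : 'M[F]_t := castmx (erefl, bs0 t) (Vd 0 i).

Lemma castK0 m n1 n2 (e : n1 = n2) (X : 'M[F]_(m, n1)) :
  castmx (erefl, esym e) (castmx (erefl, e) X) = X.
Proof. by case: n2 / e; rewrite !castmx_id. Qed.

Lemma hss_V_eq d : (d <= K)%N -> forall i, hss_V K VKf Wf d i = Vd d i.
Proof.
elim: d => [|d IH] hd i.
  by rewrite /= /VKf castK0.
rewrite /= !IH; try lia.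
have eK : (K - (K - d) = d)%N by lia.
rewrite /Wf eK.
rewrite (_ : odd (2 * i) = false); last by rewrite mul2n odd_double.
rewrite (_ : odd (2 * i + 1) = true); last by rewrite addn1 mul2n /= odd_double.
rewrite (_ : (2 * i)./2 = i); last by rewrite mul2n doubleK.
rewrite (_ : (2 * i + 1)./2 = i); last by rewrite addn1 mul2n -[i.*2.+1]/(true + i.*2)%N half_bit_double.
set V' := castmx (erefl, bsS d t) (Vd d.+1 i).
have hV : (V' <= castmx (erefl, bsS d t) (Hc A d.+1 i))%MS by apply: sub_cast; exact: Vd_sub_Hc.
rewrite !mulmxKpV.
- by rewrite hsubmxK /V' castK0.
- apply: submx_trans (sub_rsub hV) _; apply: submx_trans (Hc_child_r _ _) _; exact: Hc_sub_Vd.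
- apply: submx_trans (sub_lsub hV) _; apply: submx_trans (Hc_child_l _ _) _; exact: Hc_sub_Vd.
Qed.

Lemma Hc_sub_hssV d i : (d <= K)%N -> (Hc A d i <= hss_V K VKf Wf d i)%MS.
Proof. by move=> hd; rewrite hss_V_eq // Hc_sub_Vd. Qed.

End VCon.


Lemma hss_U_tr K t (VK : nat -> 'M[F]_t) (W : nat -> nat -> 'M[F]_t) d i :
  hss_U K (fun i => (VK i)^T) (fun k i => (W k i)^T) d i = (hss_V K VK W d i)^T.
Proof.
elim: d i => [|d IH] i /=; first by rewrite trmx_cast.
by rewrite trmx_cast tr_row_mx !trmx_mul !IH.
Qed.

Lemma blk_tr K t (A : 'M[F]_(2 ^ K * t)) d i j : (blk t A d i j)^T = blk t A^T d j i.
Proof. by apply/matrixP => a b; rewrite !mxE getn_tr. Qed.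

Lemma blk_sub_Hc K t (A : 'M[F]_(2 ^ K * t)) d i j :
  i != j -> (blk t A d j i <= Hc A d i)%MS.
Proof.
move=> hij.
apply: (@submx_getn _ _ _ _ _ (fun a => j * (2 ^ d * t) + a)%N) => a b.
rewrite mxE /Hc (@getn_mx _ _ (fun r b => if ((r < i * (2 ^ d * t)) ||
   (i * (2 ^ d * t) + 2 ^ d * t <= r))%N then getn A r (i * (2 ^ d * t) + b) else 0)).
have ha := ltn_ord a; have hb := ltn_ord b.
set m := (2 ^ d * t)%N in ha hb *.
rewrite hb andbT.
have hc : ((j * m + a < i * m) || (i * m + m <= j * m + a))%N.
  case: (ltngtP i j) hij => // h _.
    have : (i.+1 * m <= j * m)%N by rewrite leq_mul2r h orbT.
    rewrite mulSn; lia.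
  have : (j.+1 * m <= i * m)%N by rewrite leq_mul2r h orbT.
  rewrite mulSn => hh; apply/orP; left.
  apply: leq_trans hh; rewrite addnC ltn_add2r //.
case: ifP => h; first by rewrite hc.
by rewrite getn_out // leqNgt h.
Qed.

Lemma factor3 p q t (M : 'M[F]_(p, q)) (U : 'M[F]_(p, t)) (V : 'M[F]_(t, q)) :
  (M <= V)%MS -> (M^T <= U^T)%MS ->
  M = U *m ((pinvmx U^T)^T *m M *m pinvmx V) *m V.
Proof.
move=> h1 h2.
have e2 : M = U *m (pinvmx U^T)^T *m M.
  by rewrite -[M in LHS]trmxK -(mulmxKpV h2) !trmx_mul !trmxK mulmxA.
by rewrite [U *m (_ *m pinvmx V)]mulmxA [U *m (_ *m M)]mulmxA -e2 mulmxKpV.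
Qed.

Lemma part1 (K t s : nat) (A : 'M[F]_(2 ^ K * t)) :
  (2 * s <= t)%N -> quasiseparable s A -> has_HSS A.
Proof.
move=> st qs.
have HA : forall d i, (\rank (Hc A d i) <= t)%N.
  by move=> d i; apply: leq_trans (rank_Hc d i qs) st.
have HAT : forall d i, (\rank (Hc A^T d i) <= t)%N.
  by move=> d i; apply: leq_trans (rank_Hc d i (qs_tr qs)) st.
set VK := VKf A; set W := Wf A.
set UK := fun i => (VKf A^T i)^T; set R := fun k i => (Wf A^T k i)^T.
exists UK, VK, (fun i => castmx (bs0 t, bs0 t) (blk t A 0 i i)), R, W.
exists (fun k j => let d := (K - k)%N in
   let j' := if odd j then (j - 1)%N else (j + 1)%N in
   (pinvmx (hss_U K UK R d j)^T)^T *m blk t A d j j' *m pinvmx (hss_V K VK W d j')).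
split; first by move=> i _; rewrite castmxK.
move=> k hk i hi.
have hd : (K - k <= K)%N by lia.
have eU : forall d j, (hss_U K UK R d j)^T = hss_V K (VKf A^T) (Wf A^T) d j.
  by move=> d j; rewrite /UK /R hss_U_tr trmxK.
split.
  rewrite /= (_ : odd (2 * i)%N = false); last by rewrite mul2n odd_double.
  apply: factor3.
    apply: (submx_trans (@blk_sub_Hc _ _ A _ (2 * i + 1) (2 * i) _) (Hc_sub_hssV HA _ hd)); lia.
  rewrite eU blk_tr.
  apply: (submx_trans (@blk_sub_Hc _ _ A^T _ (2 * i) (2 * i + 1) _) (Hc_sub_hssV HAT _ hd)); lia.
rewrite /= (_ : odd (2 * i + 1)%N = true); last by rewrite addn1 mul2n /= odd_double.
rewrite addnK; apply: factor3.
  apply: (submx_trans (@blk_sub_Hc _ _ A _ (2 * i) (2 * i + 1) _) (Hc_sub_hssV HA _ hd)); lia.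
rewrite eU blk_tr.
apply: (submx_trans (@blk_sub_Hc _ _ A^T _ (2 * i + 1) (2 * i) _) (Hc_sub_hssV HAT _ hd)); lia.
Qed.

End Gen.

Lemma sum_pow2 K : (\sum_(1 <= k < K.+1) 2 ^ k + 2 = 2 ^ K.+1)%N.
Proof.
elim: K => [|K IH]; first by rewrite big_geq.
rewrite big_nat_recr //= addnAC IH !expnS; lia.
Qed.

Lemma part2 (K s : nat) : (1 <= K)%N ->
     (hss_size K (2 * s) + 40 * s ^ 2 = 18 * (2 ^ K * (2 * s)) * s)%N.
Proof.
move=> K1; rewrite /hss_size.
have h1 := sum_pow2 K.
have h2 : (\sum_(1 <= k < K.+1) 2 ^ k = 2 + \sum_(2 <= k < K.+1) 2 ^ k)%N.
  by rewrite big_ltn // expn1.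
move: h1 h2; rewrite expnS.
set x := (2 ^ K)%N; set S1 := (\sum_(1 <= k < K.+1) 2 ^ k)%N;
  set S2 := (\sum_(2 <= k < K.+1) 2 ^ k)%N => h1 h2.
rewrite h2.
have -> : (3 * x + 2 * S2 + (2 + S2) = 9 * x - 10)%N by lia.
have hx : (2 <= 2 * x)%N by lia.
nia.
Qed.

Theorem mainTheorem3 (F : fieldType) :
  (* (i) existence for t >= 2s *)
  (forall (K t s : nat) (A : 'M[F]_(2 ^ K * t)),
     (2 * s <= t)%N -> quasiseparable s A -> has_HSS A) /\
  (* (i) size for t = 2s: 18 n s up to lower-order terms (exactly 18ns - 40s^2) *)
  (forall (K s : nat), (1 <= K)%N ->
     (hss_size K (2 * s) + 40 * s ^ 2 = 18 * (2 ^ K * (2 * s)) * s)%N) /\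
  (* (ii) lower bound on t *)
  (forall (K t : nat) (A : 'M[F]_(2 ^ K * t)),
     (3 <= K)%N -> has_HSS A -> (\rank (sep_mx A) <= t)%N) /\
  (* (ii) the rank is at most 2s for s-quasiseparable matrices *)
  (forall (K t s : nat) (A : 'M[F]_(2 ^ K * t)),
     (3 <= K)%N -> quasiseparable s A -> (\rank (sep_mx A) <= 2 * s)%N) /\
  (* (ii) sharpness *)
  (forall (K t s : nat), (3 <= K)%N -> (s <= t)%N ->
     exists A : 'M[F]_(2 ^ K * t),
       quasiseparable s A /\ \rank (sep_mx A) = (2 * s)%N /\
       (has_HSS A -> (2 * s <= t)%N)).
Proof.
split; first by move=> K t s A; exact: part1.
split; first exact: part2.
split; first by move=> K t A; exact: part3.
split; first by move=> K t s A; exact: part4.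
move=> K t s K3 st; exists (ex_mx F K t s); split; first exact: ex_qs.
split; first exact: ex_rank.
by move=> h; rewrite -(ex_rank F K3 st); exact: part3.
Qed.
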